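(* Let $A$ be an integral residuated $\vee$-semilattice. Then: (1) $A$ is a $\to$-MTL-algebra if and only if the set of $\to$-prime filters of $A$ equals the set of $\vee$-prime filters of $A$; (2) $A$ is a $\leadsto$-MTL-algebra if and only if the set of $\leadsto$-prime filters of $A$ equals the set of $\vee$-prime filters of $A$; (3) $A$ is a pseudo MTL-algebra if and only if the set of prime filters of $A$ equals the set of $\vee$-prime filters of $A$.
   Context: A residuated poset is a partially ordered semigroup $(A;\cdot,\le)$ with binary operations $\to,\leadsto$ such that $x\cdot y\le z$ iff $x\le y\to z$ iff $y\le x\leadsto z$ for all $x,y,z$. It is a residuated $\vee$-semilattice if $(A,\le)$ is a join-semilattice (every pair has a supremum $x\vee y$). It is integral if it has a greatest element $1$ which is a multiplicative identity ($1\cdot x=x\cdot 1=x$). A filter of $A$ is a nonempty subset $F$ that is upward closed and closed under $\cdot$. A filter $F$ is $\to$-prime if for all $x,y\in A$, $x\to y\in F$ or $y\to x\in F$; $\leadsto$-prime if for all $x,y$, $x\leadsto y\in F$ or $y\leadsto x\in F$; prime if it is both $\to$-prime and $\leadsto$-prime; $\vee$-prime if $x\vee y\in F$ implies $x\in F$ or $y\in F$. $A$ is a $\to$-MTL-algebra if $(x\to y)\vee(y\to x)=1$ for all $x,y$; a $\leadsto$-MTL-algebra if $(x\leadsto y)\vee(y\leadsto x)=1$ for all $x,y$; a pseudo MTL-algebra if it is both. *)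

(* Defs.v *)
Record IRJSemilattice := {
  car :> Type;
  le : car -> car -> Prop;
  mul : car -> car -> car;
  imp : car -> car -> car;
  limp : car -> car -> car;
  join : car -> car -> car;
  one : car;
  le_refl : forall x, le x x;
  le_antisym : forall x y, le x y -> le y x -> x = y;
  le_trans : forall x y z, le x y -> le y z -> le x z;
  mul_assoc : forall x y z, mul x (mul y z) = mul (mul x y) z;
  mul_mono : forall x y x' y', le x x' -> le y y' -> le (mul x y) (mul x' y');
  resid_imp : forall x y z, le (mul x y) z <-> le x (imp y z);
  resid_limp : forall x y z, le (mul x y) z <-> le y (limp x z);
  join_ub_l : forall x y, le x (join x y);
  join_ub_r : forall x y, le y (join x y);
  join_least : forall x y z, le x z -> le y z -> le (join x y) z;
  one_top : forall x, le x one;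
  mul_one_l : forall x, mul one x = x;
  mul_one_r : forall x, mul x one = x
}.

Arguments le {_} _ _.
Arguments mul {_} _ _.
Arguments imp {_} _ _.
Arguments limp {_} _ _.
Arguments join {_} _ _.
Arguments one {_}.

Section Filters.
Variable A : IRJSemilattice.

Definition is_filter (F : A -> Prop) : Prop :=
  (exists x, F x) /\
  (forall x y, F x -> le x y -> F y) /\
  (forall x y, F x -> F y -> F (mul x y)).

Definition imp_prime_filter (F : A -> Prop) : Prop :=
  is_filter F /\ forall x y : A, F (imp x y) \/ F (imp y x).

Definition limp_prime_filter (F : A -> Prop) : Prop :=
  is_filter F /\ forall x y : A, F (limp x y) \/ F (limp y x).

Definition prime_filter (F : A -> Prop) : Prop :=
  imp_prime_filter F /\ limp_prime_filter F.

Definition join_prime_filter (F : A -> Prop) : Prop :=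
  is_filter F /\ forall x y : A, F (join x y) -> F x \/ F y.

Definition imp_MTL : Prop := forall x y : A, join (imp x y) (imp y x) = one.
Definition limp_MTL : Prop := forall x y : A, join (limp x y) (limp y x) = one.
Definition pseudo_MTL : Prop := imp_MTL /\ limp_MTL.

End Filters.

(* Main.v *)
Require Import Defs.
From Stdlib Require Import Classical Lia.
From mathcomp Require classical_sets.


Lemma le_mul_l (A : IRJSemilattice) (x y : A) : le (mul x y) x.
Proof.
  rewrite <- (mul_one_r A x) at 2. apply mul_mono. apply le_refl. apply one_top.
Qed.

Lemma le_mul_r (A : IRJSemilattice) (x y : A) : le (mul x y) y.
Proof.
  rewrite <- (mul_one_l A y) at 2. apply mul_mono. apply one_top. apply le_refl.
Qed.

Lemma mono_l (A : IRJSemilattice) (c a b : A) : le a b -> le (mul c a) (mul c b).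
Proof. intro H. apply mul_mono. apply le_refl. exact H. Qed.

Lemma mono_r (A : IRJSemilattice) (c a b : A) : le a b -> le (mul a c) (mul b c).
Proof. intro H. apply mul_mono. exact H. apply le_refl. Qed.

Lemma filter_one (A : IRJSemilattice) (F : A -> Prop) : is_filter A F -> F one.
Proof.
  intros [[x Hx] [Hup _]]. apply (Hup x). exact Hx. apply one_top.
Qed.

Fixpoint pw (A : IRJSemilattice) (u : A) (n : nat) : A :=
  match n with 0 => one | S n => mul u (pw A u n) end.
Arguments pw {A} u n.

Lemma pw_add (A : IRJSemilattice) (u : A) n m : pw u (n + m) = mul (pw u n) (pw u m).
Proof.
  induction n; simpl. now rewrite mul_one_l.
  rewrite IHn. apply mul_assoc.
Qed.

Lemma pw_mono (A : IRJSemilattice) (u v : A) n : le u v -> le (pw u n) (pw v n).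
Proof.
  intro H; induction n; simpl. apply le_refl. apply mul_mono; assumption.
Qed.

Lemma pw_in (A : IRJSemilattice) (F : A -> Prop) u n :
  is_filter A F -> F u -> F (pw u n).
Proof.
  intros HF Hu; induction n; simpl. now apply filter_one.
  destruct HF as [_ [_ Hm]]. now apply Hm.
Qed.

Lemma split_join (A : IRJSemilattice) (p x y h W a : A) :
  le (mul (mul p (mul x h)) W) a -> le (mul (mul p (mul y h)) W) a ->
  le (mul (mul p (mul (join x y) h)) W) a.
Proof.
  intros H1 H2.
  apply (proj2 (resid_imp A _ _ _)).
  apply (proj2 (resid_limp A _ _ _)).
  apply (proj2 (resid_imp A _ _ _)).
  apply join_least; apply (proj1 (resid_imp A _ _ _));
    apply (proj1 (resid_limp A _ _ _)); apply (proj1 (resid_imp A _ _ _)); assumption.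
Qed.

Lemma key_claim (A : IRJSemilattice) (a h x y : A) :
  forall N n m p, n + m = N ->
  le (mul p (pw (mul x h) n)) a -> le (mul p (pw (mul y h) m)) a ->
  le (mul p (pw (mul (join x y) h) N)) a.
Proof.
  induction N; intros n m p HN H1 H2.
  - assert (n = 0) by lia. subst n. exact H1.
  - destruct n as [|n].
    + simpl in H1. rewrite mul_one_r in H1.
      eapply le_trans. apply le_mul_l. exact H1.
    + destruct m as [|m].
      * simpl in H2. rewrite mul_one_r in H2.
        eapply le_trans. apply le_mul_l. exact H2.
      * simpl. rewrite mul_assoc. apply split_join.
        -- apply (IHN n (S m)). lia.
           rewrite <- mul_assoc. exact H1.
           eapply le_trans. apply mono_r. apply le_mul_l. exact H2.
        -- apply (IHN (S n) m). lia.
           eapply le_trans. apply mono_r. apply le_mul_l. exact H1.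
           rewrite <- mul_assoc. exact H2.
Qed.

Lemma shift_lemma (A : IRJSemilattice) (k x : A) :
  forall n, le (mul (mul k k) (pw (mul x (mul k k)) n)) (mul (mul k (pw (mul x k) n)) k).
Proof.
  induction n; simpl.
  - rewrite !mul_one_r. apply le_refl.
  -
    apply le_trans with (mul k (mul x (mul (mul k k) (pw (mul x (mul k k)) n)))).
    + eapply le_trans. apply mono_r. apply le_mul_l.
      rewrite <- (mul_assoc A x (mul k k)). apply le_refl.
    + apply le_trans with (mul k (mul x (mul (mul k (pw (mul x k) n)) k))).
      * apply mono_l. apply mono_l. exact IHn.
      * rewrite !mul_assoc. apply le_refl.
Qed.

Definition gen (A : IRJSemilattice) (M : A -> Prop) (x : A) : A -> Prop :=
  fun z => exists h n, M h /\ le (mul h (pw (mul x h) n)) z.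

Lemma gen_mul (A : IRJSemilattice) (M : A -> Prop) (x : A) :
  is_filter A M -> forall z1 z2, gen A M x z1 -> gen A M x z2 -> gen A M x (mul z1 z2).
Proof.
  intros HM z1 z2 [h1 [n [Mh1 H1]]] [h2 [m [Mh2 H2]]].
  pose proof HM as [_ [Hup Hmul]].
  set (k := mul h1 h2).
  assert (Mk : M k) by (apply Hmul; assumption).
  exists (mul k k), (n + m). split. apply Hmul; assumption.
  rewrite pw_add, mul_assoc.
  eapply le_trans. apply mono_r. apply shift_lemma.
  rewrite <- (mul_assoc _ (mul k (pw (mul x k) n)) k).
  apply mul_mono.
  - eapply le_trans; [|exact H1]. apply mul_mono. apply le_mul_l.
    apply pw_mono. apply mono_l. apply le_mul_l.
  - eapply le_trans; [|exact H2]. apply mul_mono. apply le_mul_r.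
    apply pw_mono. apply mono_l. eapply le_trans. apply le_mul_r. apply le_mul_r.
Qed.

Definition Pf (A : IRJSemilattice) (a : A) (S : A -> Prop) : Prop :=
  ~ S a /\ (forall x y, S x -> le x y -> S y) /\ (forall x y, S x -> S y -> S (mul x y)).

Lemma prime_filter_thm (A : IRJSemilattice) (a : A) :
  a <> one -> exists F, join_prime_filter A F /\ ~ F a.
Proof.
  intro Ha.
  destruct (@classical_sets.Zorn_bigcup _ (Pf A a)) as [M [PM Mmax]].
  - intros C HC Htot. unfold classical_sets.bigcup. repeat split.
    + intros [X CX Xa]. destruct (HC X CX) as [H _]. exact (H Xa).
    + intros x y [X CX Xx] Hle. exists X. exact CX.
      destruct (HC X CX) as [_ [H _]]. eapply H; eauto.
    + intros x y [X CX Xx] [Y CY Yy].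
      destruct (Htot X Y CX CY) as [HXY | HYX].
      * exists Y. exact CY. destruct (HC Y CY) as [_ [_ H]]. apply H; auto.
      * exists X. exact CX. destruct (HC X CX) as [_ [_ H]]. apply H; auto.
  - destruct PM as [Ma [Mup Mmul]].
    assert (M1 : M one).
    { apply NNPP. intro N1.
      apply (Mmax (fun z => M z \/ z = one)).
      - split. intros z Hz; now left.
        intro Hs. apply N1. apply Hs. now right.
      - repeat split.
        + intros [H|H]. auto. auto.
        + intros x y [Hx|Hx] Hle. left; eauto. right. subst x.
          apply le_antisym. apply one_top. exact Hle.
        + intros x y [Hx|Hx] [Hy|Hy].
          * left; auto.
          * subst y. rewrite mul_one_r. now left.
          * subst x. rewrite mul_one_l. now left.
          * subst. rewrite mul_one_l. now right. }
    assert (HMf : is_filter A M) by (repeat split; eauto).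
    exists M. split; [|exact Ma]. split. exact HMf.
    assert (Hgen : forall x, ~ M x -> gen A M x a).
    { intros x Nx. apply NNPP. intro Ng.
      apply (Mmax (gen A M x)).
      - split.
        + intros z Mz. exists z, 0. split. exact Mz. simpl. rewrite mul_one_r. apply le_refl.
        + intro Hs. apply Nx. apply Hs. exists one, 1. split. exact M1. simpl.
          rewrite !mul_one_r, mul_one_l. apply le_refl.
      - repeat split.
        + exact Ng.
        + intros u v [h [n [Mh Hh]]] Hle. exists h, n. split. exact Mh. eapply le_trans; eauto.
        + apply gen_mul. exact HMf. }
    intros x y Hxy. apply NNPP. intro Hn.
    assert (Nx : ~ M x) by tauto. assert (Ny : ~ M y) by tauto.
    destruct (Hgen x Nx) as [h1 [n [Mh1 H1]]].
    destruct (Hgen y Ny) as [h2 [m [Mh2 H2]]].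
    set (k := mul h1 h2).
    assert (Mk : M k) by (apply Mmul; assumption).
    apply Ma. apply (Mup (mul k (pw (mul (join x y) k) (n + m)))).
    + apply Mmul. exact Mk. apply pw_in. exact HMf. apply Mmul; assumption.
    + apply (key_claim A a k x y (n + m) n m k eq_refl).
      * eapply le_trans; [|exact H1]. apply mul_mono. apply le_mul_l.
        apply pw_mono. apply mono_l. apply le_mul_l.
      * eapply le_trans; [|exact H2]. apply mul_mono. apply le_mul_r.
        apply pw_mono. apply mono_l. apply le_mul_r.
Qed.

Lemma all_prime_one (A : IRJSemilattice) (b : A) :
  (forall F, join_prime_filter A F -> F b) -> b = one.
Proof.
  intro H. apply NNPP. intro Hb.
  destruct (prime_filter_thm A b Hb) as [F [HF NF]]. exact (NF (H F HF)).
Qed.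

Lemma imp_prime_join (A : IRJSemilattice) (F : A -> Prop) :
  imp_prime_filter A F -> join_prime_filter A F.
Proof.
  intros [HF Hp]. split. exact HF. pose proof HF as [_ [Hup Hmul]].
  assert (K : forall x y, F (join x y) -> F (imp x y) -> F y).
  { intros x y Hj Hi. apply (Hup (mul (imp (join x y) y) (join x y))).
    - apply Hmul; [|exact Hj]. apply (Hup (imp x y)). exact Hi.
      apply resid_imp. apply resid_limp. apply join_least; apply resid_limp.
      + apply resid_imp. apply le_refl.
      + apply le_mul_r.
    - apply resid_imp. apply le_refl. }
  intros x y Hj. destruct (Hp x y) as [H|H].
  - right. eapply K; eauto.
  - left. apply (K y x). apply (Hup (join x y)). exact Hj.
    apply join_least. apply join_ub_r. apply join_ub_l. exact H.
Qed.

Lemma limp_prime_join (A : IRJSemilattice) (F : A -> Prop) :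
  limp_prime_filter A F -> join_prime_filter A F.
Proof.
  intros [HF Hp]. split. exact HF. pose proof HF as [_ [Hup Hmul]].
  assert (K : forall x y, F (join x y) -> F (limp x y) -> F y).
  { intros x y Hj Hi. apply (Hup (mul (join x y) (limp (join x y) y))).
    - apply Hmul; [exact Hj|]. apply (Hup (limp x y)). exact Hi.
      apply resid_limp. apply resid_imp. apply join_least; apply resid_imp.
      + apply resid_limp. apply le_refl.
      + apply le_mul_l.
    - apply resid_limp. apply le_refl. }
  intros x y Hj. destruct (Hp x y) as [H|H].
  - right. eapply K; eauto.
  - left. apply (K y x). apply (Hup (join x y)). exact Hj.
    apply join_least. apply join_ub_r. apply join_ub_l. exact H.
Qed.

Lemma join_imp_prime (A : IRJSemilattice) (F : A -> Prop) :
  imp_MTL A -> join_prime_filter A F -> imp_prime_filter A F.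
Proof.
  intros H [HF Hj]. split. exact HF. intros x y. apply Hj. rewrite H. now apply filter_one.
Qed.

Lemma join_limp_prime (A : IRJSemilattice) (F : A -> Prop) :
  limp_MTL A -> join_prime_filter A F -> limp_prime_filter A F.
Proof.
  intros H [HF Hj]. split. exact HF. intros x y. apply Hj. rewrite H. now apply filter_one.
Qed.

Lemma imp_back (A : IRJSemilattice) :
  (forall F : A -> Prop, join_prime_filter A F -> imp_prime_filter A F) -> imp_MTL A.
Proof.
  intros H x y. apply all_prime_one. intros F HF.
  destruct (H F HF) as [[_ [Hup _]] Hp]. destruct (Hp x y) as [K|K]; eapply Hup; eauto.
  apply join_ub_l. apply join_ub_r.
Qed.

Lemma limp_back (A : IRJSemilattice) :
  (forall F : A -> Prop, join_prime_filter A F -> limp_prime_filter A F) -> limp_MTL A.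
Proof.
  intros H x y. apply all_prime_one. intros F HF.
  destruct (H F HF) as [[_ [Hup _]] Hp]. destruct (Hp x y) as [K|K]; eapply Hup; eauto.
  apply join_ub_l. apply join_ub_r.
Qed.

Theorem theorem5p7 (A : IRJSemilattice) :
  (imp_MTL A <->
     (forall F : A -> Prop, imp_prime_filter A F <-> join_prime_filter A F)) /\
  (limp_MTL A <->
     (forall F : A -> Prop, limp_prime_filter A F <-> join_prime_filter A F)) /\
  (pseudo_MTL A <->
     (forall F : A -> Prop, prime_filter A F <-> join_prime_filter A F)).
Proof.
  split; [|split].
  - split.
    + intros H F. split. apply imp_prime_join. now apply join_imp_prime.
    + intro H. apply imp_back. intros F HF. now apply H.
  - split.
    + intros H F. split. apply limp_prime_join. now apply join_limp_prime.
    + intro H. apply limp_back. intros F HF. now apply H.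
  - split.
    + intros [H1 H2] F. split.
      * intros [Hi _]. now apply imp_prime_join.
      * intro HF. split. now apply join_imp_prime. now apply join_limp_prime.
    + intro H. split.
      * apply imp_back. intros F HF. now apply H.
      * apply limp_back. intros F HF. now apply H.
Qed.
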